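(* Let $m\ge3$ be odd, $n\ge2$, and let $\mathbf{c}=(c_1,\dots,c_n)^\top$ have all components positive and pairwise distinct. Let $\mathcal{A}=(a_{i_1\dots i_m})$ be the $m$th order $n$-dimensional tensor with $a_{i_1\dots i_m}=\frac{1}{c_{i_1}+\cdots+c_{i_m}}$. Then $\mathcal{A}$ is strongly positive definite.
   Context: For $\mathbf{x}\in\mathbb{R}^n$, $\mathcal{A}\mathbf{x}^{m-1}$ is the vector with $i$th component $\sum_{i_2,\dots,i_m}a_{ii_2\dots i_m}x_{i_2}\cdots x_{i_m}$. For odd $m$ and symmetric $\mathcal{A}$, $\mathcal{A}$ is strongly positive definite if $\mathcal{A}\mathbf{x}^{m-1}>\mathbf{0}$ componentwise for all nonzero $\mathbf{x}\in\mathbb{R}^n$. *)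

(* Defs.v *)
From mathcomp Require Import all_boot all_order all_algebra all_fingroup.
Set Implicit Arguments. Unset Strict Implicit. Unset Printing Implicit Defensive.
Import Order.TTheory GRing.Theory Num.Theory.
Local Open Scope ring_scope.

(* An m-th order n-dimensional real tensor: entries indexed by maps
   (i_1,...,i_m) : 'I_m -> 'I_n (position k holds index i_{k+1}). *)
Definition tensor (R : Type) (m n : nat) := {ffun 'I_m -> 'I_n} -> R.

Definition tsymmetric (R : Type) (m n : nat) (A : tensor R m n) : Prop :=
  forall (s : {perm 'I_m}) (f : {ffun 'I_m -> 'I_n}),
    A [ffun k => f (s k)] = A f.

(* (A x^{m-1})_i = sum_{i_2..i_m} a_{i i_2 .. i_m} x_{i_2} ... x_{i_m}:
   sum over index maps whose first position (position 0) is i. *)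
Definition tapply (R : numDomainType) (m n : nat) (A : tensor R m n)
    (x : 'I_n -> R) (i : 'I_n) : R :=
  \sum_(f : {ffun 'I_m -> 'I_n} | [forall k : 'I_m, (val k == 0%N) ==> (f k == i)])
     A f * \prod_(k : 'I_m | val k != 0%N) x (f k).

(* For odd m and symmetric A: strongly positive definite iff
   A x^{m-1} > 0 componentwise for every nonzero x. *)
Definition strongly_pd (R : numDomainType) (m n : nat) (A : tensor R m n) : Prop :=
  tsymmetric A /\
  forall x : 'I_n -> R, (exists j, x j != 0) -> forall i, 0 < tapply A x i.

Definition cauchy_tensor (R : numFieldType) (m n : nat) (c : 'I_n -> R) : tensor R m n :=
  fun f => (\sum_(k : 'I_m) c (f k))^-1.
Arguments cauchy_tensor {R} m {n} c _.

(* Main.v *)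
Require Import Defs.
From mathcomp Require Import all_boot all_order all_algebra all_fingroup.
From mathcomp Require Import reals ring lra.
Import Order.TTheory GRing.Theory Num.Theory.
Set Implicit Arguments. Unset Strict Implicit.
Local Open Scope ring_scope.




Definition Qf (R : realType) (I : finType) (a z : I -> R) :=
  \sum_k \sum_l z k * z l / (a k + a l).

Lemma Qf_pivot (R : realType) (I : finType) (a z : I -> R) (p : R) :
  (forall l, 0 < a l) -> 0 < p ->
  Qf a z = 2 * p * (\sum_k z k / (a k + p)) ^+ 2
           + Qf a (fun k => z k * ((a k - p) / (a k + p))).
Proof.
move=> ha hp; rewrite /Qf expr2 mulr_suml mulr_sumr -big_split /=.
apply: eq_bigr => k _; rewrite mulr_sumr mulr_sumr -big_split /=.
apply: eq_bigr => l _.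
have hk := ha k; have hl := ha l.
have h1 : a k + a l != 0 by rewrite gt_eqF // addr_gt0.
have h2 : a k + p != 0 by rewrite gt_eqF // addr_gt0.
have h3 : a l + p != 0 by rewrite gt_eqF // addr_gt0.
by field; rewrite h1 h2 h3.
Qed.

Lemma Qf_pos (R : realType) (I : finType) (a z : I -> R) :
  (forall l, 0 < a l) ->
  (exists k, z k != 0 /\ forall l, l != k -> a l = a k -> z l = 0) ->
  0 < Qf a z.
Proof.
move=> ha.
have [N] := ubnP #|[pred l | z l != 0]|.
elim: N z => [//|N IH] z hlt [k [zk hk]].
case: (pickP [pred l | (l != k) && (z l != 0)]) => [l /andP [lk zl] | none].
  have alk : a l != a k by apply: contra zl => /eqP e; rewrite (hk l lk e).
  pose w := fun j => z j * ((a j - a l) / (a j + a l)).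
  rewrite (Qf_pivot z ha (ha l)) -/w.
  have Hw : 0 < Qf a w.
    apply: IH.
    rewrite ltnS in hlt; apply: leq_trans hlt.
    apply: (proper_card (A := [pred l | w l != 0])).
    apply/properP; split.
      apply/subsetP => j; rewrite !inE /w; apply: contra => /eqP ->; by rewrite mul0r.
    exists l; by rewrite !inE /w // subrr mul0r mulr0 eqxx.
    exists k; split.
      rewrite /w mulf_neq0 // mulf_neq0 //; first by rewrite subr_eq0 eq_sym.
      by rewrite invr_eq0 gt_eqF // addr_gt0.
    move=> j jk e; by rewrite /w (hk j jk e) mul0r.
  apply: (lt_le_trans Hw); rewrite lerDr mulr_ge0 // ?sqr_ge0 // mulr_ge0 // ltW //.
have hz l : l != k -> z l = 0.
  move=> lk; have := none l; rewrite /= lk /= => /negbT; by rewrite negbK => /eqP.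
rewrite /Qf (bigD1 k) //= [X in _ + X]big1 ?addr0; last first.
  by move=> j jk; rewrite big1 // => l _; rewrite hz // !mul0r.
rewrite (bigD1 k) //= [X in _ + X]big1 ?addr0; last first.
  by move=> j jk; rewrite (hz j jk) mulr0 mul0r.
rewrite divr_gt0 // ?addr_gt0 // lt_def mulf_neq0 //= -expr2 sqr_ge0 //.
Qed.


Lemma split_lshift m n (a : 'I_m) : split (lshift n a) = inl a.
Proof. exact: (unsplitK (inl a)). Qed.
Lemma split_rshift m n (a : 'I_n) : split (rshift m a) = inr a.
Proof. exact: (unsplitK (inr a)). Qed.

Theorem corollary3p6 (R : realType) (m n : nat) (c : 'I_n -> R) :
  (3 <= m)%N -> odd m -> (2 <= n)%N ->
  (forall i, 0 < c i) -> injective c ->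
  strongly_pd (cauchy_tensor m c).
Proof.
move=> hm hodd hn cpos cinj.
have [q ->] : exists q, m = (1 + (q + q))%N.
  exists m./2; rewrite addnn -{1}(odd_double_half m) hodd //.
split.
  move=> s f; rewrite /cauchy_tensor; congr (_^-1).
  rewrite [RHS](reindex_inj (@perm_inj _ s)) /=.
  by apply: eq_bigr => k _; rewrite ffunE.
move=> x [j1 xj1] i.
pose aJ (J : {ffun 'I_q -> 'I_n}) := c i / 2 + \sum_t c (J t).
pose yJ (J : {ffun 'I_q -> 'I_n}) := \prod_t x (J t).
pose h (JK : {ffun 'I_q -> 'I_n} * {ffun 'I_q -> 'I_n}) : {ffun 'I_(1 + (q + q)) -> 'I_n} :=
  [ffun k => match split k with inl _ => i | inr r =>
     match split r with inl a => JK.1 a | inr b => JK.2 b end end].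
pose g (f : {ffun 'I_(1 + (q + q)) -> 'I_n}) :=
  ([ffun a => f (rshift 1 (lshift q a))], [ffun b => f (rshift 1 (rshift q b))]).
have hl JK a : h JK (lshift (q + q) a) = i by rewrite ffunE split_lshift.
have hJ JK a : h JK (rshift 1 (lshift q a)) = JK.1 a.
  by rewrite ffunE split_rshift split_lshift.
have hK JK a : h JK (rshift 1 (rshift q a)) = JK.2 a.
  by rewrite ffunE split_rshift split_rshift.
have -> : tapply (cauchy_tensor (1 + (q + q)) c) x i = Qf aJ yJ.
  rewrite /tapply (reindex h); last first.
    exists g.
      move=> [J K] _ /=; congr pair; apply/ffunP => a; rewrite ffunE ?hJ ?hK //.
    move=> f; rewrite inE => /forallP Pf; apply/ffunP => k; rewrite ffunE.
    rewrite -(splitK k) unsplitK; case: (split k) => [a|r] /=.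
      have := Pf (unsplit (inl a)); rewrite /= (ord1 a) /= => /eqP -> //.
    rewrite -(splitK r) unsplitK; case: (split r) => [b|b] /=; by rewrite ffunE.
  rewrite (eq_bigl xpredT); last first.
    move=> JK; apply/forallP => k; apply/implyP => k0; rewrite ffunE.
    case: splitP k0 => [a _ _|r e /eqP k0]; first by rewrite eqxx.
    by have : (1 + r)%N = 0%N by rewrite -e; exact: k0.
  rewrite /Qf pair_bigA; apply: eq_bigr => [[J K]] _ /=.
  rewrite /cauchy_tensor big_split_ord big_ord1 hl big_split_ord /=.
  rewrite big_split_ord /= [\prod_(i0 < 1 | _) _]big1 ?mul1r; last first.
    by move=> a; rewrite (ord1 a).
  rewrite big_split_ord /=.
  have sJ : \sum_(a < q) c (h (J,K) (rshift 1 (lshift q a))) = \sum_a c (J a).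
    by apply: eq_bigr => a _; rewrite hJ.
  have sK : \sum_(a < q) c (h (J,K) (rshift 1 (rshift q a))) = \sum_a c (K a).
    by apply: eq_bigr => a _; rewrite hK.
  have pJ : \prod_(a < q) x (h (J,K) (rshift 1 (lshift q a))) = yJ J.
    by apply: eq_bigr => a _; rewrite hJ.
  have pK : \prod_(a < q) x (h (J,K) (rshift 1 (rshift q a))) = yJ K.
    by apply: eq_bigr => a _; rewrite hK.
  rewrite sJ sK pJ pK mulrC /aJ; congr (_ * _^-1).
  by rewrite {1}(splitr (c i)); ring.
apply: Qf_pos.
  move=> J; rewrite /aJ ltr_wpDr ?sumr_ge0 // => [t _|]; first exact: ltW.
  by rewrite divr_gt0.
have [j0 xj0 hmax] : exists2 j0, x j0 != 0 & forall j, x j != 0 -> c j <= c j0.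
  case: (@arg_maxP _ _ _ j1 (fun j => x j != 0) c xj1) => j0 xj0 hmx.
  by exists j0 => // j xj; apply: hmx.
exists [ffun => j0]; split.
  rewrite /yJ prodf_seq_neq0; apply/allP => t _ /=; by rewrite ffunE.
move=> J JK e; apply/eqP; apply: contraR JK => yJ0; apply/eqP/ffunP => t.
rewrite ffunE.
have xJ s : x (J s) != 0.
  by move: yJ0; rewrite /yJ prodf_seq_neq0 => /allP /(_ s (mem_index_enum _)).
have e2 : \sum_s (c j0 - c (J s)) = 0.
  rewrite sumrB; move: e; rewrite /aJ => /addrI ->.
  apply/eqP; rewrite subr_eq0; apply/eqP; by apply: eq_bigr => s _; rewrite ffunE.
have hge u : true -> 0 <= c j0 - c (J u) by move=> _; rewrite subr_ge0 hmax.
have := psumr_eq0P hge e2; move=> /(_ t isT).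
by move/eqP; rewrite subr_eq0 => /eqP /cinj.
Qed.
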